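(* Let $S=(X,\prec,\sqsubset)$ be an so-structure. Then the quotient structure $S/{\equiv_\sqsubset}:=\bigl(X/{\equiv_\sqsubset},\hat\prec,\hat\sqsubset\bigr)$ is an so-structure, both $\hat\prec$ and $\hat\sqsubset$ are partial orders on $X/{\equiv_\sqsubset}$, and for all $\alpha,\beta\in X$: (1) $\alpha\prec\beta \iff [\alpha]\,\hat\prec\,[\beta]$; (2) $\alpha\sqsubset\beta \iff [\alpha]\,\hat\sqsubset\,[\beta]\ \vee\ (\alpha\neq\beta\wedge[\alpha]=[\beta])$.
   Context: A stratified order structure (so-structure) is a triple $S=(X,\prec,\sqsubset)$ with $\prec,\sqsubset\subseteq X\times X$ such that for all $\alpha,\beta,\gamma\in X$: (S1) $\neg(\alpha\sqsubset\alpha)$; (S2) $\alpha\prec\beta\Rightarrow\alpha\sqsubset\beta$; (S3) $\alpha\sqsubset\beta\sqsubset\gamma\wedge\alpha\neq\gamma\Rightarrow\alpha\sqsubset\gamma$; (S4) $(\alpha\sqsubset\beta\wedge\beta\prec\gamma)\vee(\alpha\prec\beta\wedge\beta\sqsubset\gamma)\Rightarrow\alpha\prec\gamma$. For an so-structure, define $\alpha\equiv_\sqsubset\beta$ iff $\alpha=\beta$ or ($\alpha\sqsubset\beta$ and $\beta\sqsubset\alpha$); this is an equivalence relation on $X$, $[\alpha]$ denotes the class of $\alpha$, and $X/{\equiv_\sqsubset}$ the set of classes. On $X/{\equiv_\sqsubset}$ define $[\alpha]\,\hat\prec\,[\beta]$ iff $[\alpha]\neq[\beta]$ and $([\alpha]\times[\beta])\cap\prec\neq\emptyset$,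 and $[\alpha]\,\hat\sqsubset\,[\beta]$ iff $[\alpha]\neq[\beta]$ and $([\alpha]\times[\beta])\cap\sqsubset\neq\emptyset$. *)

(* Defs.v *)
Set Implicit Arguments.

Section SO.
Variable X : Type.

Definition so_structure (prec sqsub : X -> X -> Prop) : Prop :=
  (forall a, ~ sqsub a a) /\
  (forall a b, prec a b -> sqsub a b) /\
  (forall a b c, sqsub a b -> sqsub b c -> a <> c -> sqsub a c) /\
  (forall a b c, (sqsub a b /\ prec b c) \/ (prec a b /\ sqsub b c) -> prec a c).

Definition partial_order (T : Type) (R : T -> T -> Prop) : Prop :=
  (forall x, ~ R x x) /\ (forall x y z, R x y -> R y z -> R x z).

Variable sqsub : X -> X -> Prop.

Definition sq_equiv (a b : X) : Prop := a = b \/ (sqsub a b /\ sqsub b a).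

Definition sq_class (a : X) : X -> Prop := fun b => sq_equiv a b.

Definition quot : Type := { C : X -> Prop | exists a, C = sq_class a }.

Definition class_of (a : X) : quot :=
  exist (fun C => exists a', C = sq_class a') (sq_class a) (ex_intro _ a eq_refl).

Definition hat (R : X -> X -> Prop) (C D : quot) : Prop :=
  C <> D /\ exists a b, proj1_sig C a /\ proj1_sig D b /\ R a b.

End SO.
Arguments hat {X} sqsub R C D.
Arguments class_of {X} sqsub a.

(* Main.v *)
Require Import Defs.
From Stdlib Require Import ProofIrrelevance FunctionalExtensionality PropExtensionality Classical.
Set Implicit Arguments.

Section H.
Variable X : Type.
Variables prec sqsub : X -> X -> Prop.
Hypothesis HS : so_structure prec sqsub.

Lemma eqv_refl a : sq_equiv sqsub a a.
Proof. left; auto. Qed.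
Lemma eqv_sym a b : sq_equiv sqsub a b -> sq_equiv sqsub b a.
Proof. intros [->|[h1 h2]]; [left|right]; auto. Qed.
Lemma eqv_trans a b c : sq_equiv sqsub a b -> sq_equiv sqsub b c -> sq_equiv sqsub a c.
Proof.
  destruct HS as [S1 [S2 [S3 S4]]].
  intros [->|[h1 h2]]; auto. intros [->|[h3 h4]]. right; auto.
  destruct (classic (a = c)) as [->|n]. left; auto.
  right; split; apply S3 with b; auto.
Qed.

Lemma sig_ext (P : (X -> Prop) -> Prop) C D (p : P C) (q : P D) :
  C = D -> exist P C p = exist P D q.
Proof. intros ->. f_equal. apply proof_irrelevance. Qed.

Lemma quot_rep (C : quot sqsub) : exists a, C = class_of sqsub a.
Proof. destruct C as [C [a e]]. exists a. subst. unfold class_of. apply sig_ext; auto. Qed.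

Lemma class_eq a b : class_of sqsub a = class_of sqsub b <-> sq_equiv sqsub a b.
Proof.
  split.
  - intro e. apply (f_equal (@proj1_sig _ _)) in e. simpl in e.
    pose proof (equal_f e b) as E. unfold sq_class in E. rewrite E. apply eqv_refl.
  - intro e. unfold class_of. apply sig_ext.
    apply functional_extensionality; intro x. apply propositional_extensionality.
    unfold sq_class; split; intro h.
    + apply eqv_trans with a; auto. apply eqv_sym; auto.
    + apply eqv_trans with b; auto.
Qed.

Lemma transfer a b x y : ~ sq_equiv sqsub a b -> sq_equiv sqsub a x -> sq_equiv sqsub b y ->
  (sqsub x y -> sqsub a b) /\ (prec x y -> prec a b).
Proof.
  destruct HS as [S1 [S2 [S3 S4]]].
  intros nab [ax|[ax xa]] [yb|[by_ yb]]; split; intros h.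
  - subst; exact h.
  - subst; exact h.
  - subst x. apply S3 with y; auto. intro e; subst; apply nab; left; auto.
  - subst x. apply S4 with y; auto.
  - subst y. apply S3 with x; auto. intro e; subst; apply nab; left; auto.
  - subst y. apply S4 with x; auto.
  - assert (a <> y). { intro e; subst. apply nab. right; auto. }
    assert (a <> b). { intro e; subst. apply nab. left; auto. }
    apply S3 with y; auto. apply S3 with x; auto.
  - apply S4 with y; right; split; auto. apply S4 with x; left; auto.
Qed.

Lemma hat_class R a b : hat sqsub R (class_of sqsub a) (class_of sqsub b) <->
  ~ sq_equiv sqsub a b /\ exists x y, sq_equiv sqsub a x /\ sq_equiv sqsub b y /\ R x y.
Proof.
  unfold hat; simpl. rewrite class_eq. reflexivity.
Qed.

Lemma hat_prec a b : hat sqsub prec (class_of sqsub a) (class_of sqsub b) <-> prec a b.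
Proof.
  destruct HS as [S1 [S2 [S3 S4]]].
  rewrite hat_class. split.
  - intros [n [x [y [h1 [h2 h3]]]]]. destruct (transfer n h1 h2); auto.
  - intro h. split.
    + intros [<-|[h1 h2]]. apply (S1 a); auto.
      apply (S1 b). apply S2. apply S4 with a; auto.
    + exists a, b. repeat split; auto using eqv_refl.
Qed.

Lemma hat_sq a b : hat sqsub sqsub (class_of sqsub a) (class_of sqsub b) <->
  sqsub a b /\ ~ sq_equiv sqsub a b.
Proof.
  rewrite hat_class. split.
  - intros [n [x [y [h1 [h2 h3]]]]]. split; auto. destruct (transfer n h1 h2); auto.
  - intros [h n]. split; auto. exists a, b. repeat split; auto using eqv_refl.
Qed.

End H.

Theorem mainTheorem1 (X : Type) (prec sqsub : X -> X -> Prop)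
  (HS : so_structure prec sqsub) :
  so_structure (hat sqsub prec) (hat sqsub sqsub) /\
  partial_order (hat sqsub prec) /\
  partial_order (hat sqsub sqsub) /\
  (forall a b : X, prec a b <-> hat sqsub prec (class_of sqsub a) (class_of sqsub b)) /\
  (forall a b : X, sqsub a b <->
      (hat sqsub sqsub (class_of sqsub a) (class_of sqsub b) \/
       (a <> b /\ class_of sqsub a = class_of sqsub b))).
Proof.
  pose proof HS as HS'.
  destruct HS' as [S1 [S2 [S3 S4]]].
  assert (Irr : forall R C, ~ hat sqsub R C C).
  { intros R C [h _]. apply h; auto. }
  assert (TS : forall C D E, hat sqsub sqsub C D -> hat sqsub sqsub D E -> hat sqsub sqsub C E).
  { intros C D E.
    destruct (quot_rep C) as [a ->]; destruct (quot_rep D) as [b ->];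
    destruct (quot_rep E) as [c ->].
    rewrite !(hat_sq HS). intros [h1 n1] [h2 n2].
    assert (ac : a <> c). { intro e; subst. apply n1; right; auto. }
    split. apply S3 with b; auto.
    intros [e|[_ ca]]. auto. apply n2. right; split; auto. apply S3 with a; auto.
    intro e; subst; apply n2; left; auto. }
  assert (TP : forall C D E, hat sqsub prec C D -> hat sqsub prec D E -> hat sqsub prec C E).
  { intros C D E.
    destruct (quot_rep C) as [a ->]; destruct (quot_rep D) as [b ->];
    destruct (quot_rep E) as [c ->].
    rewrite !(hat_prec HS). intros h1 h2. apply S4 with b; left; auto. }
  assert (PS : forall C D, hat sqsub prec C D -> hat sqsub sqsub C D).
  { intros C D. destruct (quot_rep C) as [a ->]; destruct (quot_rep D) as [b ->].
    intro h. pose proof h as h'. rewrite (hat_prec HS) in h'.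
    rewrite (hat_sq HS). split; auto. destruct h as [n _]. intro e.
    apply n. apply (class_eq HS); auto. }
  split; [|split; [|split; [|split]]].
  - split; [|split; [|split]].
    + intros C. apply Irr.
    + exact PS.
    + intros C D E h1 h2 _. eauto.
    + intros C D E [[h1 h2]|[h1 h2]].
      * destruct (quot_rep C) as [a ->]; destruct (quot_rep D) as [b ->];
        destruct (quot_rep E) as [c ->].
        rewrite (hat_sq HS) in h1. rewrite (hat_prec HS) in *.
        apply S4 with b; left; tauto.
      * destruct (quot_rep C) as [a ->]; destruct (quot_rep D) as [b ->];
        destruct (quot_rep E) as [c ->].
        rewrite (hat_sq HS) in h2. rewrite (hat_prec HS) in *.
        apply S4 with b; right; tauto.
  - split. intro; apply Irr. exact TP.
  - split. intro; apply Irr. exact TS.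
  - intros a b. rewrite (hat_prec HS). tauto.
  - intros a b. rewrite (hat_sq HS), (class_eq HS). split.
    + intro h. destruct (classic (sq_equiv sqsub a b)) as [e|n]; [right|left; auto].
      split; auto. intros ->. apply (S1 b); auto.
    + intros [[h _]|[n [e|[h _]]]]; auto. contradiction.
Qed.
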